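(* For integers $j\ge 2$ let \[ I(j)=\left\lfloor \frac{1}{1+\sum_{k=2}^{j-1}\left\lfloor \frac{\gcd(k,j)}{k}\right\rfloor}\right\rfloor,\qquad S(i)=\sum_{j=2}^{i} I(j)\ (i\ge 1), \] and for integers $i\ge 1$, $x\ge 0$ let $A(i,x)=\left\lfloor \frac{1}{1+\lfloor S(i)/(x+1)\rfloor}\right\rfloor$. Then for all integers $x\ge 0$ and $i\ge 1$, $A(i,x)=1$ if $\pi(i)\le x$ and $A(i,x)=0$ otherwise.
   Context: $\pi(i)$ is the prime counting function. $\lfloor\cdot\rfloor$ is the floor function; empty sums are $0$. *)

(* Defs.v *)
(* All quantities are nonnegative integers, so every
   floor of a quotient of naturals is nat Euclidean division %/ . *)
From mathcomp Require Import all_boot.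
Set Implicit Arguments. Unset Strict Implicit. Unset Printing Implicit Defensive.

Definition prime_pi (i : nat) : nat := count prime (iota 0 i.+1).

Definition I_fun (j : nat) : nat :=
  1 %/ (1 + \sum_(2 <= k < j) (gcdn k j %/ k)).

Definition S_fun (i : nat) : nat := \sum_(2 <= j < i.+1) I_fun j.

Definition A_fun (i x : nat) : nat := 1 %/ (1 + S_fun i %/ (x + 1)).

(* Main.v *)
Require Import Defs.
From mathcomp Require Import all_boot.

Lemma one_div (s : nat) : 1 %/ (1 + s) = (s == 0).
Proof.
case: s => [|s] //=; by rewrite divn_small.
Qed.

Lemma I_prime (j : nat) : 2 <= j -> I_fun j = prime j.
Proof.
move=> hj; rewrite /I_fun one_div.
congr nat_of_bool.
rewrite sum_nat_seq_eq0.
apply/allP/idP.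
- move=> H; apply/negPn/negP => /primePn [|[d /andP[d1 dj] ddj]].
    by rewrite ltnNge hj.
  have := H d; rewrite mem_index_iota d1 dj => /(_ isT).
  by rewrite /= (gcdn_idPl ddj) divnn (ltnW d1).
- move=> /primeP [_ Hp] k; rewrite mem_index_iota => /andP[k2 kj] /=.
  have k0 : 0 < k by apply: leq_trans k2.
  have nd : ~~ (k %| j).
    apply/negP => /Hp /orP [/eqP|/eqP] E; first by rewrite E in k2.
    by rewrite E ltnn in kj.
  rewrite divn_small //.
  rewrite ltn_neqAle dvdn_leq ?dvdn_gcdl // andbT.
  apply/negP => /eqP E; move: nd; rewrite -E.
  by rewrite dvdn_gcdr.
Qed.

Lemma S_pi (i : nat) : S_fun i = prime_pi i.
Proof.
elim: i => [|i IH]; first by rewrite /S_fun big_geq.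
case: i IH => [|i] IH; first by rewrite /S_fun big_geq.
rewrite /S_fun big_nat_recr //= -/(S_fun i.+1) IH I_prime //.
by rewrite /prime_pi -(addn1 i.+2) iotaD count_cat /= addn0.
Qed.

Theorem mainTheorem3 (x i : nat) (hi : 1 <= i) :
  A_fun i x = (if prime_pi i <= x then 1 else 0).
Proof.
rewrite /A_fun S_pi one_div.
case: ifP => H.
- by rewrite divn_small ?addn1.
- apply/eqP; rewrite eqb0 -lt0n divn_gt0 ?addn1 //.
  by rewrite ltnNge H.
Qed.
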